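(* Let $(X,\mathcal F,\mu)$ be a probability space and let $H$ be a Banach space of real-valued functions on $X$ with $H\subset L^1(X,\mu)$. Let $\mathcal A,\mathcal B$ be bounded linear operators on $H$ which are non-negative (they map non-negative functions in $H$ to non-negative functions). Assume: (1) $\mathcal L=\mathcal A+\mathcal B$ is Markov, i.e. $\int_X \mathcal L u\,d\mu=\int_X u\,d\mu$ for all $u\in H$ with $u\ge 0$; (2) $J=(1-\mathcal B)^{-1}=\sum_{m=0}^\infty \mathcal B^m$ is a bounded operator on $H$. Then $\widehat{\mathcal L}=\mathcal A J=\sum_{m=0}^\infty \mathcal A\mathcal B^m$ is Markov, i.e. $\int_X\widehat{\mathcal L}v\,d\mu=\int_X v\,d\mu$ for all $v\in H$, $v\ge0$. Moreover, if $\hat h\in H$, $\hat h\ge 0$, satisfies $\widehat{\mathcal L}\hat h=\hat h$, then $h=J\hat h$ is non-negative and satisfies $\mathcal L h=h$. *)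

(* Defs.v *)
From HB Require Import structures.
From mathcomp Require Import all_boot all_order all_algebra.
From mathcomp Require Import all_classical all_reals all_analysis.
Set Implicit Arguments. Unset Strict Implicit. Unset Printing Implicit Defensive.
Import Order.TTheory GRing.Theory Num.Theory.
Import numFieldNormedType.Exports.
Local Open Scope classical_set_scope.
Local Open Scope ring_scope.

(* An element u of the Banach space H, viewed through the realisation map
   iota : H -> (X -> R), is non-negative when the function iota u is
   non-negative mu-almost everywhere (functions in L^1 are compared a.e.). *)
Definition fnonneg (d : measure_display) (X : measurableType d) (R : realType)
  (mu : {measure set X -> \bar R}) (H : Type) (iota : H -> X -> R) (u : H) : Prop :=
  {ae mu, forall x, 0 <= iota u x}.

Definition hint (d : measure_display) (X : measurableType d) (R : realType)
  (mu : {measure set X -> \bar R}) (H : Type) (iota : H -> X -> R) (u : H) : \bar R :=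
  (\int[mu]_x (iota u x)%:E)%E.

Definition is_markov (d : measure_display) (X : measurableType d) (R : realType)
  (mu : {measure set X -> \bar R}) (H : Type) (iota : H -> X -> R) (T : H -> H) : Prop :=
  forall u, fnonneg mu iota u -> hint mu iota (T u) = hint mu iota u.

Definition pos_op (d : measure_display) (X : measurableType d) (R : realType)
  (mu : {measure set X -> \bar R}) (H : Type) (iota : H -> X -> R) (T : H -> H) : Prop :=
  forall u, fnonneg mu iota u -> fnonneg mu iota (T u).

Definition neumann_partial (H : zmodType) (B : H -> H) (n : nat) (u : H) : H :=
  \sum_(m < n) iter m B u.

(* Main.v *)
Require Import Defs.
From HB Require Import structures.
From mathcomp Require Import all_boot all_order all_algebra.
From mathcomp Require Import all_classical all_reals all_analysis.
From mathcomp Require Import measurable_realfun.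
From mathcomp Require Import ring lra.
Import Order.TTheory GRing.Theory Num.Theory.
Import numFieldNormedType.Exports.
Local Open Scope classical_set_scope.
Local Open Scope ring_scope.

Lemma eps_le0 (R : realType) (x c : R) :
  (forall e : R, 0 < e -> x <= e * c) -> x <= 0.
Proof.
move=> h; rewrite leNgt; apply/negP => x0.
have c1 : 0 < `|c| + 1 by rewrite ltr_wpDl.
have := h (x / (`|c| + 1)) (divr_gt0 x0 c1).
have cc : c <= `|c| := ler_norm c.
rewrite mulrAC ler_pdivlMr //.
nra.
Qed.

Lemma lin_bounded (R : realType) (H : normedModType R) (A : {linear H -> H}) :
  continuous A -> exists2 K : R, 0 < K & forall x, `|A x| <= K * `|x|.
Proof.
move=> cA; have := (linear_bounded_continuous A).2 cA.
by move/linear_boundedP => /pinfty_ex_gt0.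
Qed.

Lemma zid (V : zmodType) (a u c e : V) : a - (u + c) = a - (u + e) - (c - e).
Proof. by rewrite opprB !opprD !addrA subrK. Qed.
Lemma zid2 (V : zmodType) (a b c : V) : c = (a - b) - (a - (b + c)).
Proof. by rewrite opprB addrC addrA subrK addrC addKr. Qed.

Theorem mainTheorem3 (d : measure_display) (X : measurableType d) (R : realType)
  (mu : probability X R) (H : completeNormedModType R)
  (iota : H -> X -> R)
  (iota_lin : forall (a : R) (u v : H) (x : X), iota (a *: u + v) x = a * iota u x + iota v x)
  (iota_inj : injective iota)
  (iota_int : forall u : H, mu.-integrable setT (fun x => (iota u x)%:E))
  (iota_cont : exists C : R, forall u : H,
      (\int[mu]_x (`|iota u x|)%:E <= (C * `|u|)%:E)%E)
  (A B : {linear H -> H})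
  (A_cont : continuous A) (B_cont : continuous B)
  (A_pos : pos_op mu iota A) (B_pos : pos_op mu iota B)
  (L_markov : is_markov mu iota (fun u => A u + B u))
  (J : H -> H) (J_cont : continuous J)
  (J_neumann : forall e : R, 0 < e ->
      \forall n \near \oo, forall u : H, `|J u - neumann_partial B n u| <= e * `|u|) :
  is_markov mu iota (fun v => A (J v)) /\
  (forall hh : H, fnonneg mu iota hh -> A (J hh) = hh ->
     fnonneg mu iota (J hh) /\ A (J hh) + B (J hh) = J hh).
Proof.
have [C0 HC0] := iota_cont.
set C := `|C0|.
have C_ge0 : 0 <= C by exact: normr_ge0.
have HC u : (\int[mu]_x (`|iota u x|)%:E <= (C * `|u|)%:E)%E.
  apply: (le_trans (HC0 u)); rewrite lee_fin ler_wpM2r // ler_norm //.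
have iotaD u v x : iota (u + v) x = iota u x + iota v x.
  by have := iota_lin 1 u v x; rewrite scale1r mul1r.
have iota0 x : iota 0 x = 0.
  have := iotaD 0 0 x; rewrite addr0 => h; lra.
have iotaZ a u x : iota (a *: u) x = a * iota u x.
  by have := iota_lin a u 0 x; rewrite addr0 iota0 addr0.
have iotaB u v x : iota (u - v) x = iota u x - iota v x.
  by rewrite -scaleN1r iotaD iotaZ; lra.
have Jnear e : 0 < e -> exists n, forall m, (n <= m)%N ->
    forall u, `|J u - neumann_partial B m u| <= e * `|u|.
  move=> e0; have [n _ Hn] := J_neumann e e0; exists n => m nm; exact: Hn.
pose rI u := fine (hint mu iota u).
have hintE u : hint mu iota u = (rI u)%:E.
  by rewrite /rI fineK // (integrable_fin_num _ (iota_int u)).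
have rID u v : rI (u + v) = rI u + rI v.
  apply: EFin_inj; rewrite EFinD -!hintE /hint.
  under eq_integral do rewrite iotaD EFinD.
  by rewrite integralD.
have rIZ a u : rI (a *: u) = a * rI u.
  apply: EFin_inj; rewrite EFinM -!hintE /hint.
  under eq_integral do rewrite iotaZ EFinM.
  by rewrite integralZl.
have rI0 : rI 0 = 0.
  have := rID 0 0; rewrite addr0 => h; lra.
have rIB u v : rI (u - v) = rI u - rI v.
  by rewrite -scaleN1r rID rIZ; lra.
have rIbound u : `|rI u| <= C * `|u|.
  rewrite -lee_fin; apply: le_trans (HC u).
  have -> : ((`|rI u|)%:E = `|(rI u)%:E|)%E by [].
  rewrite -hintE /hint; apply: le_trans (le_abse_integral _ _ _) _ => //.
    exact: measurable_int (iota_int u).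
have Sstep n u : neumann_partial B n.+1 u = neumann_partial B n u + iter n B u.
  by rewrite /neumann_partial big_ord_recr.
have Sstep' n u : neumann_partial B n.+1 u = u + B (neumann_partial B n u).
  rewrite /neumann_partial big_ord_recl linear_sum /=; congr (_ + _).
have S0 u : neumann_partial B 0 u = 0 by rewrite /neumann_partial big_ord0.
have [KA KA0 HKA] := lin_bounded _ _ _ A_cont.
have [KB KB0 HKB] := lin_bounded _ _ _ B_cont.
have nn0 : fnonneg mu iota 0.
  by apply: aeW => x; rewrite iota0.
have nnD u v : fnonneg mu iota u -> fnonneg mu iota v -> fnonneg mu iota (u + v).
  move=> hu hv; apply: filterS2 hu hv => x hu hv; rewrite iotaD; exact: addr_ge0.
have nniter v m : fnonneg mu iota v -> fnonneg mu iota (iter m B v).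
  by move=> hv; elim: m => [|m IH] //=; apply: B_pos.
have nnS v n : fnonneg mu iota v -> fnonneg mu iota (neumann_partial B n v).
  move=> hv; elim: n => [|n IH]; first by rewrite S0.
  by rewrite Sstep; apply: nnD => //; apply: nniter.
have Jeq u : J u = u + B (J u).
  apply/eqP; rewrite -subr_eq0 -normr_le0.
  apply: (@eps_le0 R _ (`|u| + KB * `|u|)) => e e0.
  have [n Hn] := Jnear e e0.
  have -> : J u - (u + B (J u)) =
     (J u - neumann_partial B n.+1 u) - B (J u - neumann_partial B n u).
    by rewrite Sstep' linearB /= (@zid _ _ _ _ (B (neumann_partial B n u))).
  apply: le_trans (ler_normB _ _) _.
  have h1 := Hn n.+1 (leqnSn n) u.
  have h2 := Hn n (leqnn n) u.
  have h3 := HKB (J u - neumann_partial B n u).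
  have h4 : 0 <= `|u| := normr_ge0 u.
  nra.
split.
  move=> v hv /=.
  have mk w : fnonneg mu iota w -> rI (A w) + rI (B w) = rI w.
    move=> hw; have := L_markov w hw; rewrite /= !hintE rID.
    by case.
  have tele n : rI (A (neumann_partial B n v)) = rI v - rI (iter n B v).
    elim: n => [|n IH]; first by rewrite S0 linear0 rI0 /= subrr.
    rewrite Sstep linearD rID IH.
    have := mk _ (nniter v n hv); rewrite /=; lra.
  rewrite !hintE; congr EFin.
  apply/eqP; rewrite -subr_eq0 -normr_le0.
  apply: (@eps_le0 R _ (C * KA * `|v| + 2 * C * `|v|)) => e e0.
  have [n Hn] := Jnear e e0.
  have -> : rI (A (J v)) - rI v =
      rI (A (J v - neumann_partial B n v)) - rI (iter n B v).
    rewrite linearB rIB tele /=; lra.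
  have hit : iter n B v = (J v - neumann_partial B n v)
                        - (J v - neumann_partial B n.+1 v).
    by rewrite Sstep -zid2.
  have h1 := Hn n.+1 (leqnSn n) v.
  have h2 := Hn n (leqnn n) v.
  have h3 : `|iter n B v| <= 2 * (e * `|v|).
    rewrite hit; apply: le_trans (ler_normB _ _) _; lra.
  set w := J v - neumann_partial B n v.
  have g1 := rIbound (A w).
  have g2 : C * `|A w| <= C * (KA * `|w|) by apply: ler_wpM2l.
  have g3 : C * (KA * `|w|) <= C * (KA * (e * `|v|)).
    by apply: ler_wpM2l => //; apply: ler_wpM2l => //; apply: ltW.
  have g4 := rIbound (iter n B v).
  have g5 : C * `|iter n B v| <= C * (2 * (e * `|v|)) by apply: ler_wpM2l.
  apply: le_trans (ler_normB _ _) _.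
  lra.
move=> hh hhn hfix; split; last by rewrite hfix -Jeq.
set f := iota (J hh).
have mf : measurable_fun setT f.
  by apply/measurable_EFinP; exact: measurable_int (iota_int (J hh)).
pose g x := `|f x| - f x.
have g0 x : 0 <= g x by rewrite /g subr_ge0 ler_norm.
have mg : measurable_fun setT g.
  apply: measurable_funB => //.
  exact: measurableT_comp (@normr_measurable R setT) mf.
have mEg : measurable_fun setT (fun x => (g x)%:E) by apply/measurable_EFinP.
set Y := (\int[mu]_x (g x)%:E)%E.
have Y0 : (0 <= Y)%E by apply: integral_ge0 => x _; rewrite lee_fin.
have Ybd e : 0 < e -> (Y <= (e * (2 * C * `|hh|))%:E)%E.
  move=> e0; have [n Hn] := Jnear e e0.
  set w := J hh - neumann_partial B n hh.
  have mw : measurable_fun setT (fun x => (`|iota w x|)%:E).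
    apply/measurable_EFinP; apply: measurableT_comp (@normr_measurable R setT) _.
    by apply/measurable_EFinP; exact: measurable_int (iota_int w).
  apply: (@le_trans _ _ (\int[mu]_x (2 * `|iota w x|)%:E)%E).
    apply: ae_ge0_le_integral => //.
    all: try (move=> x _; rewrite lee_fin // mulr_ge0 // normr_ge0).
    - by apply/measurable_EFinP; apply: measurable_funM => //; apply/measurable_EFinP.
    apply: filterS (nnS hh n hhn) => x hx _.
    rewrite lee_fin /w iotaB /g -/f.
    have k1 := ler_norm (f x - iota (neumann_partial B n hh) x).
    have k2 := ler_norm (- (f x - iota (neumann_partial B n hh) x)).
    rewrite normrN in k2.
    have [fx0|fx0] := lerP 0 (f x).
      rewrite ger0_norm //; lra.
    rewrite ltr0_norm //; lra.
  under eq_integral do rewrite EFinM.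
  rewrite ge0_integralZl_EFin //.
  apply: (@le_trans _ _ (2%:E * (C * `|w|)%:E)%E).
    by apply: lee_wpmul2l => //; exact: HC.
  rewrite -EFinM lee_fin.
  have := Hn n (leqnn n) hh.
  move=> h; have := ler_wpM2l C_ge0 h; nra.
have Yfin : Y \is a fin_num.
  rewrite ge0_fin_numE //; apply: le_lt_trans (Ybd 1 ltr01) _; exact: ltry.
have Yeq : Y = 0%E.
  apply/eqP; rewrite eq_le Y0 andbT -(fineK Yfin) lee_fin.
  apply: (@eps_le0 R _ (2 * C * `|hh|)) => e e0.
  by rewrite -lee_fin fineK //; exact: Ybd.
have : ae_eq mu setT (fun x => (g x)%:E) (cst 0%E).
  apply/ae_eq_integral_abs => //.
  rewrite -[RHS]Yeq; apply: eq_integral => x _ /=.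
  by rewrite ger0_norm.
apply: filterS => x /(_ I) /= [] /eqP; rewrite /g subr_eq0 => /eqP h.
change (0 <= f x); rewrite -h; exact: normr_ge0.
Qed.
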